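(* Let $\mathscr{X}$ be the class of functions defined in the context, let $\widehat x\in\mathscr X$ be the function with all coefficients $\theta_{m,k}=+1$, and let $x^*$ be the function defined in the context. Then: (a) $\displaystyle\max_{x\in\mathscr{X}}\max_{t\in[0,1]}|x(t)|=\max_{t\in[0,1]}\widehat x(t)=\frac13(2+\sqrt2)$, and the maximum of $\widehat x(t)$ is attained at $t=\frac13$ and $t=\frac23$. (b) $\displaystyle\max_{x\in\mathscr{X}}\max_{s,t\in[0,1]}|x(t)-x(s)|=\frac16(5+4\sqrt2)$, where the respective maxima are attained at $s=1/3$, $t=5/6$, and $x=x^*$.
   Context: The Faber--Schauder functions are $e_{0,0}(t):=(\min\{t,1-t\})^+$ and $e_{m,k}(t):=2^{-m/2}e_{0,0}(2^m t-k)$ for $t\in\mathbb R$, $m\ge1$, $k\in\mathbb Z$. For coefficients $\theta_{m,k}\in\{-1,+1\}$, the partial sums $x^n(t)=\sum_{m=0}^{n-1}\sum_{k=0}^{2^m-1}\theta_{m,k}e_{m,k}(t)$, $t\in[0,1]$, converge uniformly to a continuous function. $\mathscr X$ denotes the set of all functions $x\in C[0,1]$ of the form $x=\sum_{m=0}^\infty\sum_{k=0}^{2^m-1}\theta_{m,k}e_{m,k}$ with $\theta_{m,k}\in\{-1,+1\}$. Define $\widehat x:=\sum_{m=0}^\infty\sum_{k=0}^{2^m-1}e_{m,k}$ and $x^*:=e_{0,0}+\sum_{m=1}^\infty\Big(\sum_{k=0}^{2^{m-1}-1}e_{m,k}-\sum_{\ell=2^{m-1}}^{2^m-1}e_{m,\ell}\Big)$.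 *)

(* Defs.v *)
From Stdlib Require Import Reals Lra.
From Coquelicot Require Import Coquelicot.
Open Scope R_scope.

Definition e00 (t : R) : R := Rmax (Rmin t (1 - t)) 0.

Definition e (m k : nat) (t : R) : R :=
  Rpower 2 (- INR m / 2) * e00 (2 ^ m * t - INR k).

Fixpoint sumk (f : nat -> R) (n : nat) : R :=
  match n with
  | O => 0
  | S n' => sumk f n' + f n'
  end.

Definition level (theta : nat -> nat -> R) (m : nat) (t : R) : R :=
  sumk (fun k => theta m k * e m k t) (2 ^ m).

Definition partial (theta : nat -> nat -> R) (n : nat) (t : R) : R :=
  sumk (fun m => level theta m t) n.

Definition xfun (theta : nat -> nat -> R) (t : R) : R :=
  real (Lim_seq (fun n => partial theta n t)).

Definition sign_coeffs (theta : nat -> nat -> R) : Prop :=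
  forall m k, theta m k = 1 \/ theta m k = -1.

Definition theta_hat (m k : nat) : R := 1.
Definition xhat (t : R) : R := xfun theta_hat t.

Definition theta_star (m k : nat) : R :=
  match m with
  | O => 1
  | S m' => if Nat.ltb k (2 ^ m') then 1 else -1
  end.
Definition xstar (t : R) : R := xfun theta_star t.

(* Main.v *)
Require Import Defs.
From Stdlib Require Import Reals Lra Lia ZArith Classical.
From Coquelicot Require Import Coquelicot.
Open Scope R_scope.


Definition s2 := sqrt 2.
Definition a := s2 / 2.
Definition cc := (2 + s2) / 3.
Definition bb := (4 + s2) / 6.
Definition BB := (5 + 4 * s2) / 6.
Definition g (y : R) := e00 (frac_part y).
Definition Dm (u : R) := Rmin (2 * u) (1 - 2 * u).
Definition Hf (u : R) := Rmin cc (bb + a * u).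

Lemma s2_sq : s2 * s2 = 2.
Proof. unfold s2. apply sqrt_sqrt. lra. Qed.
Lemma s2_bnd : 1.41 < s2 < 1.42.
Proof. pose proof s2_sq. assert (0 <= s2) by (unfold s2; apply sqrt_pos). nra. Qed.
Lemma a_sq : a * a = 1/2.
Proof. unfold a. pose proof s2_sq. nra. Qed.

Lemma e00_01 r : 0 <= r <= 1 -> e00 r = Rmin r (1 - r).
Proof. intros. unfold e00. apply Rmax_left. unfold Rmin; destruct Rle_dec; lra. Qed.
Lemma e00_out r : r <= 0 \/ 1 <= r -> e00 r = 0.
Proof. intros. unfold e00. apply Rmax_right. unfold Rmin; destruct Rle_dec; lra. Qed.
Lemma e00_nonneg r : 0 <= e00 r.
Proof. unfold e00. apply Rmax_r. Qed.

Lemma g_int (k : Z) y : IZR k <= y <= IZR k + 1 -> g y = e00 (y - IZR k).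
Proof.
  intros [H1 H2]. unfold g. destruct (Rlt_or_le y (IZR k + 1)) as [Hl|Hl].
  - destruct (Int_part_frac_part_spec y k (y - IZR k)) as [_ ->]; [lra|lra|reflexivity].
  - destruct (Int_part_frac_part_spec y (k+1) 0) as [_ <-]; [lra| rewrite plus_IZR; lra|].
    rewrite (e00_out 0) by lra. rewrite e00_out; lra.
Qed.

Lemma g_range y : 0 <= g y <= 1/2.
Proof.
  unfold g. destruct (base_fp y). rewrite e00_01 by lra.
  unfold Rmin; destruct Rle_dec; lra.
Qed.

Lemma g_double y : g (2 * y) = Dm (g y).
Proof.
  pose proof (Rplus_Int_part_frac_part y) as Hy. destruct (base_fp y) as [F1 F2].
  set (n := Int_part y) in *. set (f := frac_part y) in *.
  assert (Hg : g y = Rmin f (1 - f)) by (unfold g; apply e00_01; lra).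
  rewrite Hg. unfold Dm.
  destruct (Rle_or_lt f (1/2)).
  - rewrite (g_int (2 * n)) by (rewrite mult_IZR; lra).
    rewrite mult_IZR, e00_01 by lra.
    unfold Rmin; repeat destruct Rle_dec; lra.
  - rewrite (g_int (2 * n + 1)) by (rewrite plus_IZR, mult_IZR; lra).
    rewrite plus_IZR, mult_IZR, e00_01 by lra.
    unfold Rmin; repeat destruct Rle_dec; lra.
Qed.

Lemma a_cc : a * cc = (s2 + 1) / 3.
Proof. unfold a, cc. pose proof s2_sq. lra. Qed.
Lemma a_bb : a * bb = (2 * s2 + 1) / 6.
Proof. unfold a, bb. pose proof s2_sq. lra. Qed.
Lemma a_BB : a * BB = (5 * s2 + 8) / 12.
Proof. unfold a, BB. pose proof s2_sq. lra. Qed.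
Lemma a_pos : 0.705 < a < 0.71.
Proof. unfold a. pose proof s2_bnd. lra. Qed.

Lemma Hf_le u : Hf u <= cc.
Proof. apply Rmin_l. Qed.
Lemma Hf_le2 u : Hf u <= bb + a * u.
Proof. apply Rmin_r. Qed.
Lemma Hf_nonneg u : 0 <= u -> 0 <= Hf u.
Proof. intros. unfold Hf, cc, bb. pose proof s2_bnd. pose proof a_pos.
  apply Rmin_glb; nra. Qed.

Lemma D_range u : 0 <= u <= 1/2 -> 0 <= Dm u <= 1/2.
Proof. intros. unfold Dm, Rmin. destruct Rle_dec; lra. Qed.

Lemma keyK u : 0 <= u <= 1/2 -> u + a * Hf (Dm u) <= Hf u.
Proof.
  intros Hu. pose proof (D_range u Hu).
  pose proof (Hf_le (Dm u)). pose proof (Hf_le2 (Dm u)). pose proof a_pos.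
  assert (Ha1 : a * Hf (Dm u) <= a * cc) by (apply Rmult_le_compat_l; lra).
  assert (Ha2 : a * Hf (Dm u) <= a * bb + a * a * Dm u).
  { replace (a * bb + a * a * Dm u) with (a * (bb + a * Dm u)) by ring.
    apply Rmult_le_compat_l; lra. }
  rewrite a_sq in Ha2. rewrite a_cc in Ha1. rewrite a_bb in Ha2.
  assert (Dm u <= 2 * u) by apply Rmin_l.
  assert (Dm u <= 1 - 2 * u) by apply Rmin_r.
  pose proof s2_bnd.
  unfold Hf at 2. apply Rmin_glb.
  - unfold cc. destruct (Rle_or_lt u (1/3)); lra.
  - unfold bb. destruct (Rle_or_lt u (1/6)).
    + assert ((a - 0.705) * u >= 0) by nra. lra.
    + destruct (Rle_or_lt u (1/3)).
      * assert ((1 - a) * (1/3 - u) >= 0) by nra. unfold a in *. lra.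
      * assert (a * (u - 1/3) >= 0) by nra. unfold a in *. lra.
Qed.

Lemma keyB u v : 0 <= u <= 1/2 -> 0 <= v <= 1/2 ->
  Rabs (u - v) + a * (Hf (Dm u) + Hf (Dm v)) <= BB.
Proof.
  intros Hu Hv. pose proof (Hf_le2 (Dm u)). pose proof (Hf_le2 (Dm v)). pose proof a_pos.
  assert (Ha2 : a * (Hf (Dm u) + Hf (Dm v)) <= a * (2 * bb) + a * a * (Dm u + Dm v)).
  { replace (a * (2 * bb) + a * a * (Dm u + Dm v)) with (a * ((bb + a * Dm u) + (bb + a * Dm v))) by ring.
    apply Rmult_le_compat_l; lra. }
  rewrite a_sq in Ha2. replace (a * (2 * bb)) with (2 * (a * bb)) in Ha2 by ring.
  rewrite a_bb in Ha2.
  assert (Dm u <= 2 * u) by apply Rmin_l.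
  assert (Dm u <= 1 - 2 * u) by apply Rmin_r.
  assert (Dm v <= 2 * v) by apply Rmin_l.
  assert (Dm v <= 1 - 2 * v) by apply Rmin_r.
  unfold BB. unfold Rabs; destruct Rcase_abs; lra.
Qed.

Lemma keyHalf : 1/2 + a * BB <= BB.
Proof. rewrite a_BB. unfold BB. pose proof s2_bnd. lra. Qed.

Lemma s2_pos : 0 < s2.
Proof. pose proof s2_bnd. lra. Qed.

Lemma e_eq m k t : e m k t = a ^ m * e00 (2 ^ m * t - INR k).
Proof.
  unfold e. f_equal.
  replace (- INR m / 2) with (/ 2 * - INR m) by field.
  rewrite <- Rpower_mult, Rpower_sqrt by lra.
  rewrite Rpower_Ropp, Rpower_pow by (apply sqrt_lt_R0; lra).
  rewrite <- pow_inv. f_equal. unfold a. fold s2.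
  pose proof s2_sq. pose proof s2_pos. field_simplify; [|lra]. 
  apply Rmult_eq_reg_l with s2; [|lra]. field_simplify; lra.
Qed.

Lemma sumk_zero f N : (forall j, (j < N)%nat -> f j = 0) -> sumk f N = 0.
Proof.
  induction N; intros Hf; simpl; [reflexivity|].
  rewrite IHN, Hf by (try lia; intros; apply Hf; lia). ring.
Qed.

Lemma sumk_single f N k : (k < N)%nat -> (forall j, (j < N)%nat -> j <> k -> f j = 0) ->
  sumk f N = f k.
Proof.
  induction N; intros Hk Hf; [lia|]. simpl.
  destruct (Nat.eq_dec k N) as [->|Hne].
  - rewrite sumk_zero by (intros; apply Hf; lia). ring.
  - rewrite IHN by (try lia; intros; apply Hf; lia). rewrite (Hf N) by lia. ring.
Qed.

Lemma level_local theta m t k : (k < 2 ^ m)%nat -> INR k <= 2 ^ m * t <= INR k + 1 ->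
  level theta m t = theta m k * (a ^ m * g (2 ^ m * t)).
Proof.
  intros Hk Hy. unfold level. rewrite (sumk_single _ _ k Hk).
  - rewrite e_eq. rewrite (g_int (Z.of_nat k)) by (rewrite <- INR_IZR_INZ; lra).
    rewrite <- INR_IZR_INZ. reflexivity.
  - intros j Hj Hne. rewrite e_eq. rewrite e00_out; [ring|].
    destruct (Nat.lt_ge_cases j k).
    + right. assert (INR (S j) <= INR k) by (apply le_INR; lia). rewrite S_INR in H0. lra.
    + left. assert (INR (S k) <= INR j) by (apply le_INR; lia). rewrite S_INR in H0. lra.
Qed.

Lemma pow2S m t : 2 ^ S m * t = 2 * (2 ^ m * t).
Proof. simpl. ring. Qed.

Lemma exists_k m t : 0 <= t <= 1 ->
  exists k, (k < 2 ^ m)%nat /\ INR k <= 2 ^ m * t <= INR k + 1.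
Proof.
  intros Ht. induction m.
  - exists 0%nat. simpl. split; [lia|lra].
  - destruct IHm as [k [Hk Hy]]. rewrite pow2S. rewrite Nat.pow_succ_r'.
    destruct (Rle_or_lt (2 * (2 ^ m * t)) (2 * INR k + 1)).
    + exists (2 * k)%nat. rewrite mult_INR. simpl (INR 2). split; [lia|lra].
    + exists (2 * k + 1)%nat. rewrite plus_INR, mult_INR. simpl (INR 2). simpl (INR 1). split; [lia|lra].
Qed.

Definition same m t s := exists k, (k < 2 ^ m)%nat /\ INR k <= 2 ^ m * t <= INR k + 1 /\
   INR k <= 2 ^ m * s <= INR k + 1.

Lemma same_pred m t s : same (S m) t s -> same m t s.
Proof.
  intros [k [Hk [H1 H2]]]. rewrite pow2S in H1, H2. rewrite Nat.pow_succ_r' in Hk.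
  destruct (Nat.Even_or_Odd k) as [[q ->]|[q ->]].
  - exists q. rewrite mult_INR in *. simpl (INR 2) in *. split; [lia|lra].
  - exists q. rewrite plus_INR, mult_INR in *. simpl (INR 2) in *. simpl (INR 1) in *. split; [lia|lra].
Qed.

Lemma same_0 t s : 0 <= t <= 1 -> 0 <= s <= 1 -> same 0 t s.
Proof. intros. exists 0%nat. simpl. split; [lia|lra]. Qed.

Lemma sign_abs theta m k : sign_coeffs theta -> Rabs (theta m k) = 1.
Proof. intros H. destruct (H m k) as [->| ->]; unfold Rabs; destruct Rcase_abs; lra. Qed.

Lemma apow_pos m : 0 < a ^ m.
Proof. apply pow_lt. pose proof a_pos. lra. Qed.

Lemma level_bound theta m t : sign_coeffs theta -> 0 <= t <= 1 ->
  Rabs (level theta m t) <= a ^ m * g (2 ^ m * t).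
Proof.
  intros Hs Ht. destruct (exists_k m t Ht) as [k [Hk Hy]].
  rewrite (level_local _ _ _ k Hk Hy). rewrite Rabs_mult, sign_abs by auto.
  rewrite Rabs_right; [lra|]. pose proof (apow_pos m). pose proof (g_range (2^m*t)). nra.
Qed.

Lemma level_same theta m t s : sign_coeffs theta -> same m t s ->
  Rabs (level theta m t - level theta m s) <= a ^ m * Rabs (g (2 ^ m * t) - g (2 ^ m * s)).
Proof.
  intros Hs [k [Hk [H1 H2]]].
  rewrite (level_local _ _ _ k Hk H1), (level_local _ _ _ k Hk H2).
  replace (theta m k * (a ^ m * g (2 ^ m * t)) - theta m k * (a ^ m * g (2 ^ m * s)))
    with (theta m k * (a ^ m * (g (2 ^ m * t) - g (2 ^ m * s)))) by ring.
  rewrite !Rabs_mult, sign_abs by auto. rewrite (Rabs_right (a^m)).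
  lra. pose proof (apow_pos m). lra.
Qed.

Lemma partial_S theta n t : partial theta (S n) t = partial theta n t + level theta n t.
Proof. reflexivity. Qed.

Lemma g_step m t : g (2 ^ S m * t) = Dm (g (2 ^ m * t)).
Proof. rewrite pow2S. apply g_double. Qed.

Lemma boundA theta t : sign_coeffs theta -> 0 <= t <= 1 -> forall n,
  Rabs (partial theta n t) + a ^ n * Hf (g (2 ^ n * t)) <= Hf (g t).
Proof.
  intros Hs Ht n. induction n.
  - simpl. unfold partial; simpl. rewrite Rabs_R0, !Rmult_1_l. lra.
  - rewrite partial_S, g_step. pose proof (level_bound theta n t Hs Ht).
    pose proof (Rabs_triang (partial theta n t) (level theta n t)).
    pose proof (keyK _ (g_range (2 ^ n * t))). pose proof (apow_pos n).
    assert (a ^ n * (g (2 ^ n * t) + a * Hf (Dm (g (2 ^ n * t)))) <= a ^ n * Hf (g (2 ^ n * t)))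
      by (apply Rmult_le_compat_l; lra).
    simpl pow. lra.
Qed.

Lemma partial_bound theta t n : sign_coeffs theta -> 0 <= t <= 1 ->
  Rabs (partial theta n t) <= cc.
Proof.
  intros Hs Ht. pose proof (boundA theta t Hs Ht n). pose proof (Hf_le (g t)).
  pose proof (apow_pos n). pose proof (Hf_nonneg (g (2^n*t)) (proj1 (g_range _))).
  assert (0 <= a ^ n * Hf (g (2 ^ n * t))) by nra. lra.
Qed.

Lemma boundB theta t s : sign_coeffs theta -> 0 <= t <= 1 -> 0 <= s <= 1 -> forall n,
  (same n t s -> Rabs (partial theta n t - partial theta n s) + a ^ n * BB <= BB) /\
  (~ same n t s -> Rabs (partial theta n t - partial theta n s) +
      a ^ n * (Hf (g (2 ^ n * t)) + Hf (g (2 ^ n * s))) <= BB).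
Proof.
  intros Hs Ht Hs' n. induction n as [|n [IH1 IH2]].
  - split; intros H.
    + unfold partial; simpl. rewrite Rminus_diag, Rabs_R0. lra.
    + exfalso. apply H. apply same_0; auto.
  - rewrite !partial_S, !g_step.
    set (Dl := partial theta n t - partial theta n s) in *.
    replace (partial theta n t + level theta n t - (partial theta n s + level theta n s))
      with (Dl + (level theta n t - level theta n s)) by (unfold Dl; ring).
    pose proof (Rabs_triang Dl (level theta n t - level theta n s)).
    pose proof (apow_pos n). pose proof (g_range (2 ^ n * t)). pose proof (g_range (2 ^ n * s)).
    set (u := g (2 ^ n * t)) in *. set (v := g (2 ^ n * s)) in *.
    simpl pow.
    split; intros Hn.
    + pose proof (same_pred _ _ _ Hn) as Hp. specialize (IH1 Hp).
      pose proof (level_same theta n t s Hs Hp) as HL. fold u v in HL.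
      assert (Rabs (u - v) <= 1/2) by (unfold Rabs; destruct Rcase_abs; lra).
      pose proof keyHalf.
      assert (a ^ n * (Rabs (u - v) + a * BB) <= a ^ n * BB) by (apply Rmult_le_compat_l; lra).
      lra.
    + destruct (classic (same n t s)) as [Hp|Hp].
      * specialize (IH1 Hp). pose proof (level_same theta n t s Hs Hp) as HL. fold u v in HL.
        pose proof (keyB u v H1 H2).
        assert (a ^ n * (Rabs (u - v) + a * (Hf (Dm u) + Hf (Dm v))) <= a ^ n * BB)
          by (apply Rmult_le_compat_l; lra).
        lra.
      * specialize (IH2 Hp).
        pose proof (level_bound theta n t Hs Ht) as HL1. pose proof (level_bound theta n s Hs Hs') as HL2.
        fold u in HL1. fold v in HL2.
        pose proof (Rabs_triang (level theta n t) (- level theta n s)) as HT. rewrite Rabs_Ropp in HT.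
        pose proof (keyK u H1). pose proof (keyK v H2).
        assert (a ^ n * (u + a * Hf (Dm u)) <= a ^ n * Hf u) by (apply Rmult_le_compat_l; lra).
        assert (a ^ n * (v + a * Hf (Dm v)) <= a ^ n * Hf v) by (apply Rmult_le_compat_l; lra).
        replace (level theta n t + - level theta n s) with (level theta n t - level theta n s) in HT by ring. lra.
Qed.

Lemma partial_boundB theta t s n : sign_coeffs theta -> 0 <= t <= 1 -> 0 <= s <= 1 ->
  Rabs (partial theta n t - partial theta n s) <= BB.
Proof.
  intros Hs Ht Hs'. destruct (boundB theta t s Hs Ht Hs' n) as [H1 H2].
  pose proof (apow_pos n). pose proof (g_range (2^n*t)). pose proof (g_range (2^n*s)).
  pose proof (Hf_nonneg _ (proj1 (g_range (2^n*t)))). pose proof (Hf_nonneg _ (proj1 (g_range (2^n*s)))).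
  assert (0 <= BB) by (unfold BB; pose proof s2_bnd; lra).
  destruct (classic (same n t s)) as [Hp|Hp].
  - specialize (H1 Hp). nra.
  - specialize (H2 Hp). nra.
Qed.

Lemma partial_sum theta t n : partial theta (S n) t = sum_n (fun m => level theta m t) n.
Proof.
  induction n.
  - rewrite sum_O. unfold partial; simpl. ring.
  - rewrite sum_Sn, partial_S, IHn. reflexivity.
Qed.

Lemma series_lim theta t l : is_series (fun m => level theta m t) l ->
  is_lim_seq (fun n => partial theta n t) l.
Proof.
  intros H. apply is_lim_seq_incr_1.
  apply is_lim_seq_ext with (fun n => sum_n (fun m => level theta m t) n).
  intros; symmetry; apply partial_sum.
  exact H.
Qed.

Lemma xfun_series theta t l : is_series (fun m => level theta m t) l -> xfun theta t = l.
Proof.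
  intros H. unfold xfun. rewrite (is_lim_seq_unique _ _ (series_lim _ _ _ H)). reflexivity.
Qed.

Lemma xfun_lim theta t : sign_coeffs theta -> 0 <= t <= 1 ->
  is_lim_seq (fun n => partial theta n t) (xfun theta t).
Proof.
  intros Hs Ht.
  assert (Hex : ex_series (fun m => level theta m t)).
  { apply (@ex_series_le R_AbsRing R_CompleteNormedModule) with (fun m => a ^ m * (1/2)).
    - intros n. change (norm (level theta n t)) with (Rabs (level theta n t)).
      pose proof (level_bound theta n t Hs Ht). pose proof (g_range (2^n*t)).
      pose proof (apow_pos n). nra.
    - apply ex_series_scal_r. apply ex_series_geom. pose proof a_pos.
      rewrite Rabs_right; lra. }
  destruct Hex as [l Hl]. rewrite (xfun_series _ _ _ Hl). apply series_lim; auto.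
Qed.

Lemma lim_bound (u : nat -> R) (l M : R) : is_lim_seq u l -> (forall n, Rabs (u n) <= M) -> Rabs l <= M.
Proof.
  intros H Hb. apply Rabs_le. split.
  - assert (Rbar_le (-M) l).
    { apply (is_lim_seq_le (fun _ => -M) u); auto.
      intros n. specialize (Hb n). apply Rabs_le_between in Hb. lra. apply is_lim_seq_const. }
    exact H0.
  - assert (Rbar_le l M).
    { apply (is_lim_seq_le u (fun _ => M)); auto.
      intros n. specialize (Hb n). apply Rabs_le_between in Hb. lra. apply is_lim_seq_const. }
    exact H0.
Qed.

Lemma Dm_third : Dm (1/3) = 1/3.
Proof. unfold Dm, Rmin. destruct Rle_dec; lra. Qed.

Lemma g_at y : 0 <= y <= 1 -> g y = Rmin y (1 - y).
Proof. intros. rewrite (g_int 0) by (simpl; lra). rewrite e00_01; [f_equal; lra | lra]. Qed.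

Lemma g_third m : g (2 ^ m * (1/3)) = 1/3.
Proof.
  induction m. simpl. rewrite Rmult_1_l, g_at by lra. unfold Rmin; destruct Rle_dec; lra.
  rewrite g_step, IHm. apply Dm_third.
Qed.

Lemma g_2third m : g (2 ^ m * (2/3)) = 1/3.
Proof.
  replace (2 ^ m * (2/3)) with (2 ^ S m * (1/3)) by (rewrite pow2S; field). apply g_third.
Qed.

Lemma g_56 m : g (2 ^ S m * (5/6)) = 1/3.
Proof.
  induction m.
  - rewrite g_step. simpl. rewrite Rmult_1_l, g_at by lra. unfold Dm, Rmin; repeat destruct Rle_dec; lra.
  - rewrite g_step, IHm. apply Dm_third.
Qed.

Lemma level_hat m t : 0 <= t <= 1 -> level theta_hat m t = a ^ m * g (2 ^ m * t).
Proof.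
  intros Ht. destruct (exists_k m t Ht) as [k [Hk Hy]].
  rewrite (level_local _ _ _ k Hk Hy). unfold theta_hat. ring.
Qed.

Lemma geom_third : is_series (fun m => a ^ m * (1/3)) cc.
Proof.
  replace cc with (/ (1 - a) * (1/3)).
  apply is_series_scal_r, is_series_geom. pose proof a_pos. rewrite Rabs_right; lra.
  assert (E : cc * (1 - a) = 1/3) by (unfold cc, a; pose proof s2_sq; lra).
  rewrite <- E. field. pose proof a_pos. lra.
Qed.

Lemma xhat_third : xhat (1/3) = cc.
Proof.
  unfold xhat. apply xfun_series. eapply is_series_ext; [|exact geom_third].
  intros n. simpl. rewrite level_hat by lra. rewrite g_third. reflexivity.
Qed.

Lemma xhat_2third : xhat (2/3) = cc.
Proof.
  unfold xhat. apply xfun_series. eapply is_series_ext; [|exact geom_third].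
  intros n. simpl. rewrite level_hat by lra. rewrite g_2third. reflexivity.
Qed.

Lemma pow2_pos m : 0 < 2 ^ m.
Proof. apply pow_lt; lra. Qed.

Lemma level_star_third m : level theta_star m (1/3) = a ^ m * (1/3).
Proof.
  assert (Ht : 0 <= 1/3 <= 1) by lra.
  destruct (exists_k m (1/3) Ht) as [k [Hk Hy]].
  rewrite (level_local _ _ _ k Hk Hy), g_third.
  destruct m as [|m]; simpl theta_star; [ring|].
  assert (Hlt : (k < 2 ^ m)%nat).
  { apply INR_lt. rewrite pow_INR. replace (INR 2) with 2 by (simpl; ring). pose proof (pow2_pos m).
    simpl pow in Hy. lra. }
  apply Nat.ltb_lt in Hlt. rewrite Hlt. ring.
Qed.

Lemma level_star_56 m : level theta_star (S m) (5/6) = - (a ^ S m * (1/3)).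
Proof.
  assert (Ht : 0 <= 5/6 <= 1) by lra.
  destruct (exists_k (S m) (5/6) Ht) as [k [Hk Hy]].
  rewrite (level_local _ _ _ k Hk Hy), g_56. simpl theta_star.
  assert (Hge : (2 ^ m <= k)%nat).
  { destruct (Nat.lt_ge_cases k (2 ^ m)); auto. exfalso.
    assert (INR (S k) <= INR (2 ^ m)) by (apply le_INR; lia).
    rewrite S_INR, pow_INR in H0. replace (INR 2) with 2 in H0 by (simpl; ring). pose proof (pow2_pos m).
    simpl pow in Hy. lra. }
  apply Nat.ltb_ge in Hge. rewrite Hge. ring.
Qed.

Lemma level_star_56_0 : level theta_star 0 (5/6) = 1/6.
Proof.
  assert (Ht : 0 <= 5/6 <= 1) by lra.
  destruct (exists_k 0 (5/6) Ht) as [k [Hk Hy]].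
  rewrite (level_local _ _ _ k Hk Hy). simpl. rewrite Rmult_1_l, g_at by lra.
  unfold Rmin; destruct Rle_dec; lra.
Qed.

Lemma xstar_third : xstar (1/3) = cc.
Proof.
  unfold xstar. apply xfun_series. eapply is_series_ext; [|exact geom_third].
  intros n. rewrite level_star_third. reflexivity.
Qed.

Lemma xstar_56 : xstar (5/6) = 1/2 - cc.
Proof.
  unfold xstar. apply xfun_series.
  assert (HV : is_series (fun k => level theta_star (S k) (5/6)) (1/3 - cc)).
  { eapply is_series_ext; [intros n; symmetry; apply level_star_56|].
    replace (1/3 - cc) with (/ (1 - a) * (- a / 3)).
    - eapply is_series_ext; [|apply is_series_scal_r, is_series_geom].
      + intros n. simpl. field.
      + pose proof a_pos. rewrite Rabs_right; lra.
    - assert (E : cc * (1 - a) = 1/3) by (unfold cc, a; pose proof s2_sq; lra).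
      assert (E2 : (1/3 - cc) * (1 - a) = - a / 3) by lra.
      rewrite <- E2. field. pose proof a_pos. lra. }
  apply is_series_decr_1.
  match goal with |- is_series _ ?l => replace l with (1/3 - cc) end. exact HV.
  rewrite level_star_56_0. unfold plus, opp; simpl. lra.
Qed.

Theorem theorem2p2 :
  (* (a) *)
  ((forall theta, sign_coeffs theta ->
      forall t, 0 <= t <= 1 -> Rabs (xfun theta t) <= (2 + sqrt 2) / 3) /\
   (forall t, 0 <= t <= 1 -> xhat t <= (2 + sqrt 2) / 3) /\
   xhat (1/3) = (2 + sqrt 2) / 3 /\
   xhat (2/3) = (2 + sqrt 2) / 3) /\
  (* (b) *)
  ((forall theta, sign_coeffs theta ->
      forall s t, 0 <= s <= 1 -> 0 <= t <= 1 ->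
        Rabs (xfun theta t - xfun theta s) <= (5 + 4 * sqrt 2) / 6) /\
   Rabs (xstar (5/6) - xstar (1/3)) = (5 + 4 * sqrt 2) / 6).
Proof.
  assert (PA : forall theta, sign_coeffs theta ->
      forall t, 0 <= t <= 1 -> Rabs (xfun theta t) <= (2 + sqrt 2) / 3).
  { intros theta Hs t Ht. change ((2 + sqrt 2) / 3) with cc.
    apply (lim_bound _ _ _ (xfun_lim theta t Hs Ht)).
    intros n. apply partial_bound; auto. }
  split; [split; [|split; [|split]]|split].
  - exact PA.
  - intros t Ht. eapply Rle_trans; [apply Rle_abs|]. apply PA; auto.
    intros m k; left; reflexivity.
  - exact xhat_third.
  - exact xhat_2third.
  - intros theta Hs s t Hs' Ht. change ((5 + 4 * sqrt 2) / 6) with BB.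
    apply (lim_bound (fun n => partial theta n t - partial theta n s)).
    + apply is_lim_seq_minus'; apply xfun_lim; auto.
    + intros n. apply partial_boundB; auto.
  - rewrite xstar_56, xstar_third. change ((5 + 4 * sqrt 2) / 6) with BB.
    unfold cc, BB. rewrite Rabs_left; [lra|]. pose proof s2_bnd. lra.
Qed.
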